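(* Let $\mathfrak{H}$ be a Euclidean space and let $(\mathcal{X},\mathsf{S},\gamma,(\Lambda_{a})_{a\in\mathcal{A}})$ be a spectral decomposition system for $\mathfrak{H}$ such that the set $\{\Lambda_a\}_{a\in\mathcal{A}}$ is closed in $\mathscr{L}(\mathcal{X},\mathfrak{H})$. Let $D$ be a nonempty $\mathsf{S}$-invariant subset of $\mathcal{X}$ and let $X\in\mathfrak{H}$. Then: (i) $N_{\mathsf{F}}(X;\gamma^{-1}(D))=\{\Lambda_a y: y\in N_{\mathsf{F}}(\gamma(X);D)\ \text{and}\ a\in\mathcal{A}_X\}$; (ii) $N_{\mathsf{L}}(X;\gamma^{-1}(D))=\{\Lambda_a y: y\in N_{\mathsf{L}}(\gamma(X);D)\ \text{and}\ a\in\mathcal{A}_X\}$.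
   Context: A Euclidean space is a finite-dimensional real Hilbert space; $\mathscr{L}(\mathcal{X},\mathfrak{H})$ carries the operator-norm topology. A spectral decomposition system for a Euclidean space $\mathfrak{H}$ is a tuple $(\mathcal{X},\mathsf{S},\gamma,(\Lambda_a)_{a\in\mathcal{A}})$ where $\mathcal{X}$ is a Euclidean space, $\mathsf{S}$ is a group acting on $\mathcal{X}$ such that each map $x\mapsto \mathsf{s}\cdot x$ is a linear isometry, $\gamma\colon\mathfrak{H}\to\mathcal{X}$ is a mapping, and each $\Lambda_a\colon\mathcal{X}\to\mathfrak{H}$ is a linear isometry, such that: [A] there exists a mapping $\tau\colon\mathcal{X}\to\mathcal{X}$ with $\tau(\mathsf{s}\cdot x)=\tau(x)$ for all $\mathsf{s},x$, $\tau(x)\in\mathsf{S}\cdot x$ for all $x$, and $\gamma\circ\Lambda_a=\tau$ for all $a\in\mathcal{A}$; [B] for every $X\in\mathfrak{H}$ there exists $a\in\mathcal{A}$ with $X=\Lambda_a\gamma(X)$; [C] $\langle X,Y\rangle\le\langle\gamma(X),\gamma(Y)\rangle$ for all $X,Y\in\mathfrak{H}$. $\mathcal{A}_X=\{a\in\mathcal{A}:X=\Lambda_a\gamma(X)\}$. A set $D\subset\mathcal{X}$ is $\mathsf{S}$-invariant if $\mathsf{s}\cdot x\in D$ for all $x\in D$, $\mathsf{s}\in\mathsf{S}$. For a nonempty subset $C$ of a Euclidean space $\mathcal{H}$: the Fréchet normal cone is $N_{\mathsf{F}}(x;C)=\{y:\limsup_{z\to x,\,z\in C\setminus\{x\}}\langle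 z-x,y\rangle/\|z-x\|\le0\}$ if $x\in C$, $\varnothing$ otherwise; the limiting normal cone $N_{\mathsf{L}}(x;C)$, for $x\in C$, is the set of $y$ for which there exist $x_n\to x$, $y_n\to y$ with $y_n\in N_{\mathsf{F}}(x_n;C)$ for all $n$, and $N_{\mathsf{L}}(x;C)=\varnothing$ for $x\notin C$. *)

(* Defs.v *)
(* Euclidean spaces are modelled as coordinate spaces
   'rV[R]_n with the standard inner product, R : realType. *)
From mathcomp Require Import all_boot all_order all_algebra.
From mathcomp Require Import all_classical all_reals.
Set Implicit Arguments. Unset Strict Implicit. Unset Printing Implicit Defensive.
Import Order.TTheory GRing.Theory Num.Theory.
Local Open Scope ring_scope.
Local Open Scope classical_set_scope.

Section Defs.
Variable R : realType.

Definition dotv n (u v : 'rV[R]_n) : R := (u *m v^T) 0 0.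
Definition enorm n (u : 'rV[R]_n) : R := Num.sqrt (dotv u u).

Definition econv n (u : nat -> 'rV[R]_n) (l : 'rV[R]_n) : Prop :=
  forall eps : R, 0 < eps -> exists N : nat, forall k, (N <= k)%N ->
    enorm (u k - l) < eps.

Definition lin_isometry n m (M : 'M[R]_(n, m)) : Prop :=
  forall x : 'rV[R]_n, enorm (x *m M) = enorm x.

Definition opconv n m (Mk : nat -> 'M[R]_(n, m)) (M : 'M[R]_(n, m)) : Prop :=
  forall eps : R, 0 < eps -> exists N : nat, forall k, (N <= k)%N ->
    forall x : 'rV[R]_n, enorm (x *m (Mk k - M)) <= eps * enorm x.

(* closedness in L(X,H) with the operator-norm topology (a metric topology,
   so closed = sequentially closed) *)
Definition opclosed n m (F : set 'M[R]_(n, m)) : Prop :=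
  forall (Mk : nat -> 'M[R]_(n, m)) (M : 'M[R]_(n, m)),
    (forall k, F (Mk k)) -> opconv Mk M -> F M.

(* Frechet normal cone:
   limsup_{z -> x, z in C\{x}} <z - x, y>/||z - x|| <= 0 *)
Definition frechet_normal n (C : set 'rV[R]_n) (x : 'rV[R]_n) : set 'rV[R]_n :=
  [set y | C x /\
    forall eps : R, 0 < eps -> exists2 delta : R, 0 < delta &
      forall z, C z -> z != x -> enorm (z - x) < delta ->
        dotv (z - x) y <= eps * enorm (z - x)].

Definition limiting_normal n (C : set 'rV[R]_n) (x : 'rV[R]_n) : set 'rV[R]_n :=
  [set y | C x /\
    exists (xs ys : nat -> 'rV[R]_n), econv xs x /\ econv ys y /\
      forall k, frechet_normal C (xs k) (ys k)].

Definition is_group (G : Type) (gmul : G -> G -> G) (gone : G) (ginv : G -> G) :=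
  [/\ forall a b c, gmul a (gmul b c) = gmul (gmul a b) c,
      forall a, gmul gone a = a, forall a, gmul a gone = a,
      forall a, gmul (ginv a) a = gone & forall a, gmul a (ginv a) = gone].

Definition is_isometric_action (G : Type) (gmul : G -> G -> G) (gone : G)
    n (act : G -> 'rV[R]_n -> 'rV[R]_n) :=
  [/\ forall x, act gone x = x,
      forall g h x, act (gmul g h) x = act g (act h x),
      forall g (a : R) x y, act g (a *: x + y) = a *: act g x + act g y &
      forall g x, enorm (act g x) = enorm x].

(* spectral decomposition system (X = R^n, S = G acting by act, gamma, Lambda)
   for the Euclidean space H = R^m *)
Definition spectral_decomposition_system (G : Type) (gmul : G -> G -> G)
    (gone : G) (ginv : G -> G) n (act : G -> 'rV[R]_n -> 'rV[R]_n)
    m (gamma : 'rV[R]_m -> 'rV[R]_n) (A : Type) (Lam : A -> 'M[R]_(n, m)) :=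
  [/\ is_group gmul gone ginv,
      is_isometric_action gmul gone act,
      forall a, lin_isometry (Lam a) &
      [/\
      (* [A] *)
      (exists tau : 'rV[R]_n -> 'rV[R]_n,
         [/\ forall s x, tau (act s x) = tau x,
             (forall x, exists s, tau x = act s x) &
             forall a x, gamma (x *m Lam a) = tau x]),
      (* [B] *)
      (forall X : 'rV[R]_m, exists a, X = gamma X *m Lam a) &
      (* [C] *)
      (forall X Y : 'rV[R]_m, dotv X Y <= dotv (gamma X) (gamma Y))]].

Definition A_of n m (gamma : 'rV[R]_m -> 'rV[R]_n) (A : Type)
    (Lam : A -> 'M[R]_(n, m)) (X : 'rV[R]_m) : set A :=
  [set a | X = gamma X *m Lam a].

Definition S_invariant (G : Type) n (act : G -> 'rV[R]_n -> 'rV[R]_n)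
    (D : set 'rV[R]_n) := forall x s, D x -> D (act s x).

End Defs.

(* Main.v *)
Require Import Defs.
From mathcomp Require Import all_boot all_order all_algebra.
From mathcomp Require Import all_classical all_reals.
From mathcomp Require Import all_analysis.
From mathcomp Require Import ring lra.
Import Order.TTheory GRing.Theory Num.Theory.
Import numFieldTopology.Exports numFieldNormedType.Exports.
Local Open Scope ring_scope.
Local Open Scope classical_set_scope.

Lemma dotvE {R : realType} {n : nat} (u v : 'rV[R]_n) : dotv u v = \sum_j u 0 j * v 0 j.
Proof. by rewrite /dotv !mxE; apply: eq_bigr => j _; rewrite mxE. Qed.

Lemma dotvC {R : realType} {n : nat} (u v : 'rV[R]_n) : dotv u v = dotv v u.
Proof. by rewrite !dotvE; apply: eq_bigr => j _; rewrite mulrC. Qed.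

Lemma dotvDl {R : realType} {n : nat} (u v w : 'rV[R]_n) : dotv (u + v) w = dotv u w + dotv v w.
Proof. by rewrite !dotvE -big_split; apply: eq_bigr => j _; rewrite !mxE mulrDl. Qed.

Lemma dotvZl {R : realType} {n : nat} a (u w : 'rV[R]_n) : dotv (a *: u) w = a * dotv u w.
Proof. by rewrite !dotvE mulr_sumr; apply: eq_bigr => j _; rewrite !mxE mulrA. Qed.

Lemma dotvNl {R : realType} {n : nat} (u w : 'rV[R]_n) : dotv (- u) w = - dotv u w.
Proof. by rewrite -scaleN1r dotvZl mulN1r. Qed.

Lemma dotvBl {R : realType} {n : nat} (u v w : 'rV[R]_n) : dotv (u - v) w = dotv u w - dotv v w.
Proof. by rewrite dotvDl dotvNl. Qed.

Lemma dotvDr {R : realType} {n : nat} (u v w : 'rV[R]_n) : dotv w (u + v) = dotv w u + dotv w v.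
Proof. by rewrite dotvC dotvDl !(dotvC w). Qed.

Lemma dotvZr {R : realType} {n : nat} a (u w : 'rV[R]_n) : dotv w (a *: u) = a * dotv w u.
Proof. by rewrite dotvC dotvZl dotvC. Qed.

Lemma dotvBr {R : realType} {n : nat} (u v w : 'rV[R]_n) : dotv w (u - v) = dotv w u - dotv w v.
Proof. by rewrite dotvC dotvBl !(dotvC w). Qed.

Lemma dotv0l {R : realType} {n : nat} (w : 'rV[R]_n) : dotv 0 w = 0.
Proof. by rewrite dotvE big1 // => j _; rewrite mxE mul0r. Qed.

Lemma dotv0r {R : realType} {n : nat} (w : 'rV[R]_n) : dotv w 0 = 0.
Proof. by rewrite dotvC dotv0l. Qed.

Lemma dotvv_ge0 {R : realType} {n : nat} (u : 'rV[R]_n) : 0 <= dotv u u.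
Proof. by rewrite dotvE; apply: sumr_ge0 => j _; rewrite -expr2 sqr_ge0. Qed.

Lemma dotvv_eq0 {R : realType} {n : nat} (u : 'rV[R]_n) : dotv u u = 0 -> u = 0.
Proof.
rewrite dotvE => /eqP; rewrite psumr_eq0; last by move=> j _; rewrite -expr2 sqr_ge0.
move=> /allP H; apply/rowP => j; rewrite mxE.
have := H j (mem_index_enum j); rewrite implyTb -expr2 sqrf_eq0.
by move/eqP.
Qed.

Lemma enorm_ge0 {R : realType} {n : nat} (u : 'rV[R]_n) : 0 <= enorm u.
Proof. exact: sqrtr_ge0. Qed.

Lemma enorm_sq {R : realType} {n : nat} (u : 'rV[R]_n) : enorm u ^+ 2 = dotv u u.
Proof. by rewrite /enorm sqr_sqrtr // dotvv_ge0. Qed.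

Lemma enorm_eq0 {R : realType} {n : nat} (u : 'rV[R]_n) : enorm u = 0 -> u = 0.
Proof. by move=> h; apply: dotvv_eq0; rewrite -enorm_sq h expr0n. Qed.

Lemma enorm0 {R : realType} {n : nat} : enorm (0 : 'rV[R]_n) = 0.
Proof. by rewrite /enorm dotv0l sqrtr0. Qed.

Lemma sq_le (R : realType) (a b : R) : 0 <= b -> a ^+ 2 <= b ^+ 2 -> a <= b.
Proof. move=> b0 h; rewrite leNgt; apply/negP => ab; nra. Qed.

Lemma CS {R : realType} {n : nat} (u v : 'rV[R]_n) : dotv u v <= enorm u * enorm v.
Proof.
have [u0|u0] := eqVneq (enorm u) 0.
  by rewrite (enorm_eq0 u u0) dotv0l enorm0 mul0r.
have [v0|v0] := eqVneq (enorm v) 0.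
  by rewrite (enorm_eq0 v v0) dotv0r enorm0 mulr0.
have a0 : 0 < enorm u by rewrite lt_neqAle eq_sym u0 enorm_ge0.
have b0 : 0 < enorm v by rewrite lt_neqAle eq_sym v0 enorm_ge0.
have := dotvv_ge0 (enorm v *: u - enorm u *: v).
rewrite !(dotvBl, dotvBr, dotvZl, dotvZr) -!enorm_sq (dotvC v u).
have ab0 := mulr_gt0 a0 b0.
move: a0 b0 ab0; set a := enorm u; set b := enorm v; set d := dotv u v.
move=> a0 b0 ab0 h.
rewrite leNgt; apply/negP => dab.
have : 0 < (d - a * b) * (a * b) by rewrite mulr_gt0 // subr_gt0.
nra.
Qed.

Lemma enormN {R : realType} {n : nat} (u : 'rV[R]_n) : enorm (- u) = enorm u.
Proof. by rewrite /enorm dotvNl dotvC dotvNl opprK. Qed.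

Lemma enormB {R : realType} {n : nat} (u v : 'rV[R]_n) : enorm (u - v) = enorm (v - u).
Proof. by rewrite -enormN opprB. Qed.

Lemma enormZ {R : realType} {n : nat} a (u : 'rV[R]_n) : enorm (a *: u) = `|a| * enorm u.
Proof. by rewrite /enorm dotvZl dotvZr mulrA -expr2 sqrtrM ?sqr_ge0 // sqrtr_sqr. Qed.

Lemma enormD {R : realType} {n : nat} (u v : 'rV[R]_n) : enorm (u + v) <= enorm u + enorm v.
Proof.
apply: sq_le; first by rewrite addr_ge0 ?enorm_ge0.
rewrite enorm_sq !(dotvDl, dotvDr) (dotvC v u) -!enorm_sq.
have := CS u v; nra.
Qed.

Lemma enorm_sqB {R : realType} {n : nat} (u v : 'rV[R]_n) :
  enorm (u - v) ^+ 2 = enorm u ^+ 2 + enorm v ^+ 2 - 2 * dotv u v.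
Proof.
rewrite !enorm_sq !(dotvBl, dotvBr) (dotvC v u); ring.
Qed.

Lemma enorm_coord {R : realType} {n : nat} (u : 'rV[R]_n) i : `|u 0 i| <= enorm u.
Proof.
apply: sq_le; first exact: enorm_ge0.
rewrite enorm_sq dotvE (bigD1 i) //= real_normK ?num_real // -expr2 lerDl.
by apply: sumr_ge0 => j _; rewrite -expr2 sqr_ge0.
Qed.

Lemma enorm_entries {R : realType} {n : nat} (u : 'rV[R]_n) c :
  (forall j, `|u 0 j| <= c) -> enorm u <= n%:R * c.
Proof.
case: n u => [|n] u h.
  by rewrite /enorm dotvE big_ord0 sqrtr0 mul0r.
have c0 : 0 <= c by apply: le_trans (h ord0); exact: normr_ge0.
apply: sq_le; first by rewrite mulr_ge0.
rewrite enorm_sq dotvE.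
apply: (@le_trans _ _ (\sum_(j < n.+1) c ^+ 2)).
  apply: ler_sum => j _; rewrite -expr2 -real_normK ?num_real //.
  by rewrite ler_pXn2r ?nnegrE ?normr_ge0.
rewrite sumr_const card_ord -mulr_natr exprMn.
have : (1 <= n.+1%:R :> R) by rewrite ler1n.
have : 0 <= c ^+ 2 by rewrite sqr_ge0.
nra.
Qed.
Lemma polar {R : realType} {n k : nat} (f : 'rV[R]_n -> 'rV[R]_k) :
  (forall x y, f (x + y) = f x + f y) -> (forall x, enorm (f x) = enorm x) ->
  forall x y, dotv (f x) (f y) = dotv x y.
Proof.
move=> fD fN x y.
have := fN (x + y); rewrite fD => /(congr1 (fun t => t ^+ 2)).
rewrite !enorm_sq !(dotvDl, dotvDr) (dotvC (f y)) (dotvC y).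
have := fN x; have := fN y => /(congr1 (fun t => t ^+ 2)) + /(congr1 (fun t => t ^+ 2)).
rewrite !enorm_sq => -> ->.
move=> h; lra.
Qed.

Lemma dotv_tr {R : realType} {n m : nat} (M : 'M[R]_(n, m)) u z :
  dotv (u *m M^T) z = dotv u (z *m M).
Proof. by rewrite /dotv trmx_mul mulmxA. Qed.

Lemma dotv_trr {R : realType} {n m : nat} (M : 'M[R]_(n, m)) u z :
  dotv z (u *m M^T) = dotv (z *m M) u.
Proof. by rewrite dotvC dotv_tr dotvC. Qed.

Lemma iso_dot {R : realType} {n m : nat} (M : 'M[R]_(n, m)) :
  lin_isometry M -> forall x y, dotv (x *m M) (y *m M) = dotv x y.
Proof. by move=> iM; apply: (polar (fun x => x *m M)) => // x y; rewrite mulmxDl. Qed.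

Lemma dotv_orth {R : realType} {n : nat} (d : 'rV[R]_n) :
  (forall z, dotv d z = 0) -> d = 0.
Proof. by move=> h; apply: dotvv_eq0; apply: h. Qed.

Lemma iso_MMt {R : realType} {n m : nat} (M : 'M[R]_(n, m)) :
  lin_isometry M -> forall v : 'rV[R]_n, v *m M *m M^T = v.
Proof.
move=> iM v; suff : v *m M *m M^T - v = 0 by move/eqP; rewrite subr_eq0 => /eqP.
apply: dotv_orth => z.
by rewrite dotvBl dotv_tr iso_dot // subrr.
Qed.

Lemma iso_Bn {R : realType} {n m : nat} (M : 'M[R]_(n, m)) :
  lin_isometry M -> forall x y, enorm (x *m M - y *m M) = enorm (x - y).
Proof. by move=> iM x y; rewrite -mulmxBl iM. Qed.

Lemma tr_bound {R : realType} {n m : nat} (N : 'M[R]_(n, m)) e :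
  0 <= e -> (forall x, enorm (x *m N) <= e * enorm x) ->
  forall u, enorm (u *m N^T) <= e * enorm u.
Proof.
move=> e0 h u; set w := u *m N^T.
have h1 : enorm w ^+ 2 <= enorm u * (e * enorm w).
  rewrite enorm_sq {1}/w dotv_tr.
  apply: le_trans (CS _ _) _; apply: ler_wpM2l; [exact: enorm_ge0 | exact: h].
have := enorm_ge0 w; have := enorm_ge0 u.
have [w0|w0] := eqVneq (enorm w) 0.
  by rewrite w0 => *; rewrite mulr_ge0.
move=> *; have wp : 0 < enorm w by rewrite lt_neqAle eq_sym w0 enorm_ge0.
rewrite -(ler_pM2r wp); nra.
Qed.

Lemma iso_tr_bound {R : realType} {n m : nat} (M : 'M[R]_(n, m)) :
  lin_isometry M -> forall u, enorm (u *m M^T) <= enorm u.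
Proof.
move=> iM u; have := @tr_bound R n m M 1 ler01 _ u; rewrite mul1r; apply.
by move=> x; rewrite iM mul1r.
Qed.

Lemma close_eq {R : realType} {n : nat} (a b : 'rV[R]_n) :
  (forall e, 0 < e -> enorm (a - b) <= e) -> a = b.
Proof.
move=> h; apply/eqP; rewrite -subr_eq0; apply/eqP; apply: enorm_eq0.
have := enorm_ge0 (a - b); rewrite le_eqVlt => /orP [/eqP <- //|h0].
have h1 : 0 < enorm (a - b) / 2 by rewrite divr_gt0.
have := h _ h1; lra.
Qed.

Lemma bound_mul {R : realType} {n m : nat} (N : 'M[R]_(n, m)) e x :
  (forall i j, `|N i j| <= e) -> enorm (x *m N) <= (m%:R * (n%:R * e)) * enorm x.
Proof.
move=> h; have -> : m%:R * (n%:R * e) * enorm x = m%:R * (n%:R * e * enorm x) by ring.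
apply: enorm_entries => j.
rewrite mxE; apply: le_trans (ler_norm_sum _ _ _) _.
apply: (@le_trans _ _ (\sum_(i < n) e * enorm x)).
  apply: ler_sum => i _; rewrite normrM mulrC; apply: ler_pM => //.
  exact: enorm_coord.
by rewrite sumr_const card_ord -mulrA mulr_natl.
Qed.

Lemma inv_small {R : realType} (e : R) : 0 < e ->
  exists N, forall j, (N <= j)%N -> (j.+1%:R)^-1 < e.
Proof.
move=> e0; exists (Num.Def.archi_bound (e^-1)) => j jN.
have : 0 <= e^-1 by rewrite invr_ge0 ltW.
move/archi_boundP.
move=> h; have h2 : e^-1 < j.+1%:R.
  apply: lt_le_trans h _; rewrite ler_nat; exact: leqW.
rewrite -(invrK e) ltf_pV2 ?posrE ?invr_gt0 // ltr0n.
Qed.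
Lemma cluster_rV (R : realType) p (u : nat -> 'rV[R]_p) (B : R) :
  (forall k i, `|u k 0 i| <= B) ->
  exists l : 'rV[R]_p, forall eps, 0 < eps -> forall N, exists2 k, (N <= k)%N &
     forall i, `|u k 0 i - l 0 i| < eps.
Proof.
move=> uB.
pose A := [set v : 'rV[R]_p | forall i, `[(- B), B]%classic (v ord0 i)].
have cA : compact A.
  by apply: (@rV_compact _ _ (fun=> `[(- B), B]%classic)) => _; apply: segment_compact.
have FA : \forall k \near \oo, A (u k).
  near=> k => i /=; rewrite in_itv /= -ler_norml; exact: uB.

have [l [Al cl]] := cA (u @ \oo) _ FA.
exists l => eps eps0 N.
have F1 : (u @ \oo) (u @` [set k | (N <= k)%N]).
  by apply: filterS (nbhs_infty_ge N) => k kN; exists k.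
have F2 : nbhs l (ball l eps) by apply: nbhsx_ballx.
have [_ [[k kN <-] H]] := cl _ _ F1 F2.
exists k => // i; case: H => _ /(_ 0 i); rewrite -ball_normE /= distrC.
by rewrite [X in X 0 i]/= [X in `|_ - X|]/=.
Unshelve. all: by end_near. Qed.

Lemma extract {R : realType} {p q : nat} (u : nat -> 'M[R]_(p,q)) B :
  (forall k i j, `|u k i j| <= B) ->
  exists phi : nat -> nat, exists L : 'M[R]_(p,q), (forall j, (j <= phi j)%N) /\
    forall e, 0 < e -> exists N, forall j, (N <= j)%N ->
      forall i i', `|u (phi j) i i' - L i i'| < e.
Proof.
move=> uB.
have [l hl] : exists l : 'rV[R]_(p * q), forall eps, 0 < eps -> forall N,
    exists2 k, (N <= k)%N & forall i, `|mxvec (u k) 0 i - l 0 i| < eps.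
  apply: (@cluster_rV R _ _ B) => k i.
  by case/mxvec_indexP: i => i j; rewrite mxvecE; exact: uB.
have hc : forall j, exists k, (j <= k)%N /\
    forall i, `|mxvec (u k) 0 i - l 0 i| < (j.+1%:R)^-1.
  move=> j; have jp : 0 < (j.+1%:R : R)^-1 by rewrite invr_gt0 ltr0Sn.
  have [k jk hk] := hl _ jp j; by exists k.
have [phi hphi] := choice hc.
exists phi, (vec_mx l); split; first by move=> j; case: (hphi j).
move=> e e0; have [N hN] := inv_small _ e0; exists N => j jN i i'.
case: (hphi j) => _ /(_ (mxvec_index i i')); rewrite mxvecE.
have -> : vec_mx l i i' = l 0 (mxvec_index i i') by rewrite -{2}(vec_mxK l) mxvecE.
move=> h; apply: lt_trans h _; exact: hN.
Qed.

Lemma entries_opconv {R : realType} {n m : nat} (Mk : nat -> 'M[R]_(n,m)) (L : 'M[R]_(n,m)) :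
  (forall e, 0 < e -> exists N, forall j, (N <= j)%N ->
      forall i i', `|Mk j i i' - L i i'| < e) -> opconv Mk L.
Proof.
move=> h eps eps0; set c : R := m%:R * n%:R + 1.
have c0 : 0 < c by rewrite /c ltr_wpDl ?mulr_ge0 ?ler0n.
have [N hN] := h (eps / c) (divr_gt0 eps0 c0).
exists N => k kN x.
apply: le_trans (bound_mul _ (eps / c) x _) _.
  by move=> i j; rewrite !mxE; apply: ltW; exact: hN.
apply: ler_wpM2r; first exact: enorm_ge0.
have -> : m%:R * (n%:R * (eps / c)) = eps - eps / c.
  by rewrite /c; field; rewrite -/c gt_eqF.
by rewrite lerBlDr lerDl ltW // divr_gt0.
Qed.

Lemma iso_entry {R : realType} {n m : nat} (M : 'M[R]_(n,m)) :
  lin_isometry M -> forall i j, `|M i j| <= 1.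
Proof.
move=> iM i j; have := enorm_coord ('e_i *m M) j.
rewrite -rowE mxE rowE iM.
suff -> : enorm ('e_i : 'rV[R]_n) = 1 by [].
rewrite /enorm dotvE (bigD1 i) //= big1 => [|k ki]; last first.
  by rewrite !mxE (negbTE ki) andbF mulr0.
by rewrite !mxE !eqxx mulr1 addr0 sqrtr1.
Qed.

Definition tz {R : realType} (f : nat -> R) :=
  forall e, 0 < e -> exists N, forall j, (N <= j)%N -> f j <= e.

Lemma tzD {R : realType} (f g : nat -> R) : tz f -> tz g -> tz (fun j => f j + g j).
Proof.
move=> hf hg e e0; have e2 : 0 < e / 2 by rewrite divr_gt0.
have [N1 h1] := hf _ e2; have [N2 h2] := hg _ e2.
exists (maxn N1 N2) => j; rewrite geq_max => /andP [j1 j2].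
have := h1 j j1; have := h2 j j2; lra.
Qed.

Lemma tzZ {R : realType} (c : R) (f : nat -> R) : 0 <= c -> tz f -> tz (fun j => c * f j).
Proof.
move=> c0 hf e e0; have e1 : 0 < e / (c + 1) by rewrite divr_gt0 // ltr_wpDl.
have [N h] := hf _ e1; exists N => j jN.
apply: le_trans (ler_wpM2l c0 (h j jN)) _.
rewrite mulrA ler_pdivrMr ?ltr_wpDl //; nra.
Qed.

Lemma tz_le {R : realType} (f g : nat -> R) : (forall j, f j <= g j) -> tz g -> tz f.
Proof.
move=> fg hg e e0; have [N h] := hg _ e0; exists N => j jN.
exact: le_trans (fg j) (h j jN).
Qed.

Lemma tz_sub {R : realType} (f : nat -> R) (phi : nat -> nat) :
  (forall j, (j <= phi j)%N) -> tz f -> tz (fun j => f (phi j)).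
Proof.
move=> hp hf e e0; have [N h] := hf _ e0; exists N => j jN.
apply: h; exact: leq_trans jN (hp j).
Qed.

Lemma tz_inv {R : realType} : tz (fun j : nat => (j.+1%:R : R)^-1).
Proof.
move=> e e0; have [N h] := inv_small _ e0; exists N => j jN; exact: ltW (h j jN).
Qed.

Lemma econv_tz {R : realType} {n : nat} (u : nat -> 'rV[R]_n) l :
  econv u l -> tz (fun k => enorm (u k - l)).
Proof. move=> h e e0; have [N hN] := h e e0; exists N => k kN; exact: ltW (hN k kN). Qed.

Lemma tz_econv {R : realType} {n : nat} (u : nat -> 'rV[R]_n) l :
  tz (fun k => enorm (u k - l)) -> econv u l.
Proof.
move=> h e e0; have e2 : 0 < e / 2 by rewrite divr_gt0.
have [N hN] := h _ e2; exists N => k kN; apply: le_lt_trans (hN k kN) _.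
lra.
Qed.

Lemma tz_eq {R : realType} {n : nat} (a b : 'rV[R]_n) (f : nat -> R) :
  (forall j, enorm (a - b) <= f j) -> tz f -> a = b.
Proof.
move=> h hf; apply: close_eq => e e0; have [N hN] := hf _ e0.
exact: le_trans (h N) (hN N (leqnn N)).
Qed.

Lemma opconv_tz {R : realType} {n m : nat} (Mk : nat -> 'M[R]_(n, m)) L
  (z : nat -> 'rV[R]_n) B :
  opconv Mk L -> (forall j, enorm (z j) <= B) ->
  tz (fun j => enorm (z j *m (Mk j - L))).
Proof.
move=> h zB e e0.
have B0 : 0 <= B by apply: le_trans (zB 0%N); exact: enorm_ge0.
have e1 : 0 < e / (B + 1) by rewrite divr_gt0 // ltr_wpDl.
have [N hN] := h _ e1; exists N => j jN.
apply: le_trans (hN j jN (z j)) _.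
apply: le_trans (ler_wpM2l (ltW e1) (zB j)) _.
rewrite mulrAC ler_pdivrMr ?ltr_wpDl //; nra.
Qed.

Lemma opconv_tz_tr {R : realType} {n m : nat} (Mk : nat -> 'M[R]_(n, m)) L
  (z : 'rV[R]_m) :
  opconv Mk L -> tz (fun j => enorm (z *m (Mk j - L)^T)).
Proof.
move=> h e e0.
have e1 : 0 < e / (enorm z + 1) by rewrite divr_gt0 // ltr_wpDl ?enorm_ge0.
have [N hN] := h _ e1; exists N => j jN.
apply: le_trans (tr_bound _ _ (ltW e1) (hN j jN) z) _.
have := enorm_ge0 z.
rewrite mulrAC ler_pdivrMr ?ltr_wpDl ?enorm_ge0 //; nra.
Qed.

Lemma down {R : realType} {n m : nat} (M : 'M[R]_(n, m)) (Dd : set 'rV[R]_n)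
  (Cc : set 'rV[R]_m) x Y :
  lin_isometry M -> (forall z, Dd z -> Cc (z *m M)) -> Dd x ->
  frechet_normal Cc (x *m M) Y -> frechet_normal Dd x (Y *m M^T).
Proof.
move=> iM DC Dx [_ FY]; split => // eps eps0.
have [delta d0 hd] := FY eps eps0; exists delta => // z Dz zx hz.
rewrite dotv_trr mulmxBl.
have hn : enorm (z *m M - x *m M) = enorm (z - x) by rewrite iso_Bn.
rewrite -hn; apply: hd; first exact: DC.
  apply/negP => /eqP h; move/negP: zx; apply; apply/eqP.
  have : enorm (z - x) = 0 by rewrite -hn h subrr enorm0.
  by move/enorm_eq0/eqP; rewrite subr_eq0 => /eqP.
by rewrite hn.
Qed.

Theorem proposition3p4 (R : realType) (n m : nat)
    (G : Type) (gmul : G -> G -> G) (gone : G) (ginv : G -> G)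
    (act : G -> 'rV[R]_n -> 'rV[R]_n)
    (gamma : 'rV[R]_m -> 'rV[R]_n) (A : Type) (Lam : A -> 'M[R]_(n, m)) :
  spectral_decomposition_system gmul gone ginv act gamma Lam ->
  opclosed (range Lam) ->
  forall (D : set 'rV[R]_n), D !=set0 -> S_invariant act D ->
  forall X : 'rV[R]_m,
    frechet_normal (gamma @^-1` D) X =
      [set Y | exists y a, [/\ frechet_normal D (gamma X) y,
                               A_of gamma Lam X a & Y = y *m Lam a]] /\
    limiting_normal (gamma @^-1` D) X =
      [set Y | exists y a, [/\ limiting_normal D (gamma X) y,
                               A_of gamma Lam X a & Y = y *m Lam a]].
Proof.
move=> [[gA g1l g1r gVl gVr] [act1 actM actL actN] Hiso [[tau [tauS tauO gL]] HB HC]].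
move=> Hcl D _ Dinv.
set C := gamma @^-1` D.
have gN : forall Z, enorm (gamma Z) = enorm Z.
  by move=> Z; have [a {2}->] := HB Z; rewrite Hiso.
have gLip : forall Z W, enorm (gamma Z - gamma W) <= enorm (Z - W).
  move=> Z W; apply: sq_le; first exact: enorm_ge0.
  by rewrite !enorm_sqB !gN lerD2l lerN2 ler_pM2l ?HC.
have actD : forall g x y, act g (x + y) = act g x + act g y.
  by move=> g x y; have := actL g 1 x y; rewrite !scale1r.
have actdot : forall g x y, dotv (act g x) (act g y) = dotv x y.
  by move=> g; apply: polar => //; apply: actD.
have actK : forall s x, act (ginv s) (act s x) = x.
  by move=> s x; rewrite -actM gVl act1.
have DL : forall z a, D z -> D (gamma (z *m Lam a)).
  by move=> z a Dz; rewrite gL; have [s ->] := tauO z; exact: Dinv.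
have up : forall a x y, D x -> frechet_normal D x y ->
    frechet_normal C (x *m Lam a) (y *m Lam a).
  move=> a x y Dx [_ Fy]; split; first exact: DL.
  move=> eps eps0; have [delta d0 hd] := Fy eps eps0.
  set yn := enorm y.
  have yn0 : 0 <= yn := enorm_ge0 y.
  have d1 : 0 < eps * delta / (2 * (yn + 1)).
    by rewrite divr_gt0 ?mulr_gt0 // ltr_wpDl.
  exists (Num.min delta (eps * delta / (2 * (yn + 1)))).
    by rewrite lt_min d0 d1.
  move=> Z CZ ZX; rewrite lt_min => /andP [hZd hZd1].
  set X' := x *m Lam a; set Y' := y *m Lam a.
  set r0 := enorm (Z - X').
  have r00 : 0 < r0.
    rewrite lt_neqAle enorm_ge0 andbT eq_sym; apply/negP => /eqP /enorm_eq0 /eqP.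
    by rewrite subr_eq0 (negbTE ZX).
  set t := r0 / eps.
  have t0 : 0 < t by rewrite divr_gt0.
  have teps : t * eps = r0 by rewrite /t mulrVK // unitfE gt_eqF.
  have [s hs] := tauO (x + t *: y).
  set w := act (ginv s) (gamma Z).
  have Dw : D w by apply: Dinv.
  have key : dotv Z X' + t * dotv Z Y' <= dotv w x + t * dotv w y.
    have := HC Z ((x + t *: y) *m Lam a).
    rewrite gL hs mulmxDl -scalemxAl dotvDr dotvZr -/X' -/Y'.
    by rewrite -(actdot (ginv s)) actK dotvDr dotvZr.
  have wN : enorm w = enorm Z by rewrite actN gN.
  have xN : enorm X' = enorm x by rewrite Hiso.
  have e1 : r0 ^+ 2 = enorm Z ^+ 2 + enorm x ^+ 2 - 2 * dotv Z X'.
    by rewrite enorm_sqB xN.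
  set r := enorm (w - x).
  have e2 : r ^+ 2 = enorm Z ^+ 2 + enorm x ^+ 2 - 2 * dotv w x.
    by rewrite /r enorm_sqB wN.
  have e3 : dotv (Z - X') Y' = dotv Z Y' - dotv x y.
    by rewrite dotvBl iso_dot.
  have e4 : dotv (w - x) y = dotv w y - dotv x y by rewrite dotvBl.
  rewrite e3 -/r0.
  have r0' : 0 <= r := enorm_ge0 _.
  suff : t * (dotv Z Y' - dotv x y) <= r0 ^+ 2.
    move=> h; rewrite leNgt; apply/negP => hc.
    have : 0 < t * (dotv Z Y' - dotv x y - eps * r0) by rewrite mulr_gt0 // subr_gt0.
    nra.
  have [wx|wx] := eqVneq w x.
    have : r = 0 by rewrite /r wx subrr enorm0.
    move: e4; rewrite wx subrr dotv0l => e4 r0z.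
    move: e1 e2 key; rewrite -/r r0z wx; nra.
  have [rd|rd] := ltP r delta.
    have := hd w Dw wx rd; rewrite -/r e4 => hw.
    have hw' : t * (dotv w y - dotv x y) <= r0 * r.
      by rewrite -teps -mulrA; apply: ler_wpM2l; [exact: ltW|].
    have : 0 <= (r - r0) ^+ 2 by rewrite sqr_ge0.
    nra.
  have := CS (w - x) y; rewrite -/r -/yn e4 => hw.
  have tyn : t * yn <= delta / 2.
    rewrite /t mulrAC ler_pdivrMr //.
    move: hZd1; rewrite -/r0 ltr_pdivlMr ?mulr_gt0 ?ltr_wpDl // => h.
    nra.
  have : 0 <= r * (r - 2 * t * yn) by rewrite mulr_ge0 //; nra.
  nra.

have sub1 : forall X Y, frechet_normal C X Y -> exists y a,
    [/\ frechet_normal D (gamma X) y, A_of gamma Lam X a & Y = y *m Lam a].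
  move=> X Y [CX FY]; set x := gamma X.
  pose t (k : nat) : R := (k.+1%:R)^-1.
  have t0 : forall k, 0 < t k by move=> k; rewrite invr_gt0 ltr0Sn.
  have [b hb] := choice (fun k => HB (X + t k *: Y)).
  pose u k := gamma (X + t k *: Y).
  pose Lk k := Lam (b k).
  have iLk : forall k, lin_isometry (Lk k) := fun k => Hiso (b k).
  have hu : forall k, u k *m Lk k = X + t k *: Y by move=> k; rewrite -hb.
  have [phi [L [hphi hconv]]] := @extract R _ _ Lk 1 (fun k => iso_entry _ (Hiso (b k))).
  have opc : opconv (fun j => Lk (phi j)) L := entries_opconv _ _ hconv.
  have hr : forall j, range Lam (Lk (phi j)) by move=> j; exists (b (phi j)).
  have [b0 _ Lb0] := Hcl _ _ hr opc.
  have iL : lin_isometry L by rewrite -Lb0.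
  have DLL : forall z, D z -> C (z *m L) by rewrite -Lb0 => z Dz; exact: (DL z b0 Dz).
  have F1 : forall k, enorm (u k - x) <= t k * enorm Y.
    move=> k; have := gLip (X + t k *: Y) X.
    by rewrite addrAC subrr add0r enormZ ger0_norm ?(ltW (t0 _)).
  pose Zk k := x *m Lk k.
  pose d k := enorm (Zk k - X).
  have d0 : forall k, 0 <= d k by move=> k; exact: enorm_ge0.
  have dk_le : forall k, d k <= 2 * t k * enorm Y.
    move=> k; rewrite /d; have <- : x *m Lk k - u k *m Lk k + t k *: Y = Zk k - X.
      by rewrite hu opprD addrA subrK.
    apply: le_trans (enormD _ _) _; rewrite (iso_Bn _ (iLk k)) enormB enormZ ger0_norm ?(ltW (t0 _)) //.
    have := F1 k; lra.
  have F3 : forall eps, 0 < eps -> exists K, forall k, (K <= k)%N -> d k <= 2 * t k * eps.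
    move=> eps eps0; have [delta dl0 hd] := FY eps eps0.
    have Yn0 := enorm_ge0 Y.
    have e0 : 0 < delta / (2 * (enorm Y + 1)) by rewrite divr_gt0 ?mulr_gt0 ?ltr_wpDl.
    have [K hK] := tz_inv _ e0; exists K => k kK.
    have tk := hK k kK; rewrite -/(t k) in tk.
    have dd : d k < delta.
      apply: le_lt_trans (dk_le k) _.
      move: tk; rewrite ler_pdivlMr ?mulr_gt0 ?ltr_wpDl // => tk.
      have := t0 k; nra.
    have sq1 : enorm (Zk k - X - t k *: Y) ^+ 2 <= (t k * enorm Y) ^+ 2.
      have -> : Zk k - X - t k *: Y = x *m Lk k - u k *m Lk k.
        by rewrite hu opprD addrA.
      rewrite (iso_Bn _ (iLk k)) enormB; rewrite ler_pXn2r ?nnegrE ?enorm_ge0 ?mulr_ge0 ?enorm_ge0 ?(ltW (t0 _)) //.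
    rewrite enorm_sqB enormZ ger0_norm ?(ltW (t0 _)) // dotvZr -/(d k) in sq1.
    have [ZX|ZX] := eqVneq (Zk k) X.
      by rewrite /d ZX subrr enorm0; have := t0 k; nra.
    have hF := hd (Zk k) (DL x (b k) CX) ZX dd; rewrite -/(d k) in hF.
    have dp : 0 < d k.
      rewrite lt_neqAle d0 andbT eq_sym; apply/negP => /eqP /enorm_eq0 /eqP.
      by rewrite subr_eq0 (negbTE ZX).
    have := t0 k; nra.
  have Claim1 : X = x *m L.
    apply: (@tz_eq _ _ _ _ (fun j => (2 * enorm Y) * t (phi j) +
                      enorm (x *m (Lk (phi j) - L)))).
      move=> j; have -> : X - x *m L = (X - Zk (phi j)) + x *m (Lk (phi j) - L).
        by rewrite mulmxBr addrA subrK.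
      apply: le_trans (enormD _ _) _; rewrite enormB -/(d (phi j)).
      have := dk_le (phi j); lra.
    apply: tzD; first by apply: tzZ; [rewrite mulr_ge0 ?enorm_ge0 | exact: tz_sub hphi tz_inv].
    exact: (opconv_tz _ _ (fun=> x) (enorm x) opc (fun=> lexx _)).
  have Claim2 : frechet_normal D x (Y *m L^T).
    by apply: (down _ _ _ _ _ iL DLL CX); rewrite -Claim1.
  pose v k := (t k)^-1 *: (u k - x).
  have hv1 : forall k, enorm (v k) <= enorm Y.
    move=> k; rewrite enormZ ger0_norm ?invr_ge0 ?(ltW (t0 _)) //.
    rewrite ler_pdivrMl //; exact: F1.
  have hv2 : forall k, Y - v k *m Lk k = (t k)^-1 *: (Zk k - X).
    move=> k; rewrite /v -scalemxAl mulmxBl hu; apply/rowP => j; rewrite !mxE.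
    by field; rewrite gt_eqF.
  have tzd : tz (fun k => (t k)^-1 * d k).
    move=> e e0; have [K hK] := F3 (e / 2) (divr_gt0 e0 (ltr0Sn _ 1)).
    exists K => k kK; have tk := t0 k.
    have ti : 0 <= (t k)^-1 by rewrite invr_ge0 ltW.
    apply: le_trans (ler_wpM2l ti (hK k kK)) _.
    have -> : (t k)^-1 * (2 * t k * (e / 2)) = e by field; rewrite gt_eqF.
    done.
  have Claim3 : Y *m L^T *m L = Y.
    apply/eqP; rewrite -subr_eq0; apply/eqP.
    apply: (@tz_eq _ _ _ _ (fun j => 2 * ((t (phi j))^-1 * d (phi j) +
                      enorm (v (phi j) *m (Lk (phi j) - L))))); last first.
      apply: tzZ => //; apply: tzD; first exact: tz_sub hphi tzd.
      exact: (opconv_tz _ _ (fun j => v (phi j)) (enorm Y) opc (fun j => hv1 (phi j))).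
    move=> j; rewrite subr0; set w := Y - v (phi j) *m L.
    have -> : Y *m L^T *m L - Y = w *m L^T *m L - w.
      by rewrite /w !mulmxBl iso_MMt // opprB addrA subrK.
    apply: le_trans (enormD _ _) _; rewrite enormN iL.
    have hw : enorm w <= (t (phi j))^-1 * d (phi j) + enorm (v (phi j) *m (Lk (phi j) - L)).
      have -> : w = (Y - v (phi j) *m Lk (phi j)) + v (phi j) *m (Lk (phi j) - L).
        by rewrite /w mulmxBr addrA subrK.
      apply: le_trans (enormD _ _) _; rewrite hv2 enormZ ger0_norm ?invr_ge0 ?(ltW (t0 _)) //.
    have := iso_tr_bound _ iL w; lra.
  exists (Y *m L^T), b0; split => //.
    by rewrite /A_of /= Lb0.
  by rewrite Lb0 Claim3.

move=> X; split.
  apply/seteqP; split => Y.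
    exact: sub1.
  move=> [y [a [Fy aX ->]]]; rewrite /A_of /= in aX.
  by have := up a _ y Fy.1 Fy; rewrite -aX.
apply/seteqP; split => Y.
  move=> [CX [xs [ys [cx [cy hF]]]]].
  set x := gamma X.
  have hc : forall k, exists p : 'rV[R]_n * A,
      [/\ frechet_normal D (gamma (xs k)) p.1, A_of gamma Lam (xs k) p.2
        & ys k = p.1 *m Lam p.2].
    move=> k; have [y [a h]] := sub1 _ _ (hF k); by exists (y, a).
  have [f hf] := choice hc.
  pose Lk k := Lam (f k).2.
  pose yk k := (f k).1.
  have iLk : forall k, lin_isometry (Lk k) := fun k => Hiso (f k).2.
  have [phi [L [hphi hconv]]] := @extract R _ _ Lk 1 (fun k => iso_entry _ (iLk k)).
  have opc : opconv (fun j => Lk (phi j)) L := entries_opconv _ _ hconv.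
  have hr : forall j, range Lam (Lk (phi j)) by move=> j; exists (f (phi j)).2.
  have [b0 _ Lb0] := Hcl _ _ hr opc.
  have iL : lin_isometry L by rewrite -Lb0.
  have hxs : forall k, xs k = gamma (xs k) *m Lk k by move=> k; case: (hf k).
  have hys : forall k, ys k = yk k *m Lk k by move=> k; case: (hf k).
  have tzx : tz (fun j => enorm (xs (phi j) - X)) by exact: (tz_sub _ _ hphi (econv_tz _ _ cx)).
  have tzy : tz (fun j => enorm (ys (phi j) - Y)) by exact: (tz_sub _ _ hphi (econv_tz _ _ cy)).
  have Claim1 : X = x *m L.
    apply: (@tz_eq _ _ _ _ (fun j => 2 * enorm (xs (phi j) - X) +
                      enorm (x *m (Lk (phi j) - L)))); last first.
      apply: tzD; first exact: tzZ.
      exact: (opconv_tz _ _ (fun=> x) (enorm x) opc (fun=> lexx _)).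
    move=> j; set k := phi j.
    have -> : X - x *m L = (X - xs k) + (gamma (xs k) *m Lk k - x *m Lk k)
                          + x *m (Lk k - L).
      by rewrite -hxs mulmxBr !addrA subrK addrNK.
    apply: le_trans (enormD _ _) _; apply: le_trans (lerD (enormD _ _) (lexx _)) _.
    rewrite (iso_Bn _ (iLk k)) enormB.
    have := gLip (xs k) X; lra.
  set y := Y *m L^T.
  have hyk : forall k, yk k = ys k *m (Lk k)^T by move=> k; rewrite hys iso_MMt.
  have tzyy : tz (fun j => enorm (yk (phi j) - y)).
    apply: (@tz_le _ _ (fun j => enorm (ys (phi j) - Y) + enorm (Y *m (Lk (phi j) - L)^T))).
      move=> j; set k := phi j.
      have -> : yk k - y = (ys k - Y) *m (Lk k)^T + Y *m (Lk k - L)^T.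
        by rewrite hyk /y linearB /= mulmxBr mulmxBl addrA subrK.
      apply: le_trans (enormD _ _) _; apply: lerD => //; exact: iso_tr_bound.
    by apply: tzD => //; exact: opconv_tz_tr.
  have Claim3 : Y = y *m L.
    apply: (@tz_eq _ _ _ _ (fun j => enorm (ys (phi j) - Y) + 3 * enorm (yk (phi j) - y)
                 + enorm (y *m (Lk (phi j) - L)))); last first.
      apply: tzD; last exact: (opconv_tz _ _ (fun=> y) (enorm y) opc (fun=> lexx _)).
      by apply: tzD => //; apply: tzZ.
    move=> j; set k := phi j.
    have -> : Y - y *m L = (Y - ys k) + (yk k - y) *m (Lk k - L) + y *m (Lk k - L)
                          + (yk k - y) *m L.
      by rewrite hys !mulmxBr !mulmxBl; rewrite !addrA; apply/rowP => i; rewrite !mxE; ring.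
    apply: le_trans (enormD _ _) _; rewrite iL.
    apply: le_trans (lerD (enormD _ _) (lexx _)) _.
    apply: le_trans (lerD (lerD (enormD _ _) (lexx _)) (lexx _)) _.
    have h2 : enorm ((yk k - y) *m (Lk k - L)) <= 2 * enorm (yk k - y).
      rewrite mulmxBr; apply: le_trans (enormD _ _) _; rewrite enormN iL iLk; lra.
    rewrite enormB; lra.
  exists y, b0; split.
  - split => //; exists (fun j => gamma (xs (phi j))), (fun j => yk (phi j)).
    split; [|split].
    + apply: tz_econv; apply: (@tz_le _ _ (fun j => enorm (xs (phi j) - X))) => // j; exact: gLip.
    + exact: tz_econv.
    + by move=> j; case: (hf (phi j)).
  - by rewrite /A_of /= Lb0.
  - by rewrite Lb0.

move=> [y [a [[Dx [xs [ys [cx [cy hF]]]]] aX ->]]]; rewrite /A_of /= in aX.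
split; first exact: Dx.
exists (fun k => xs k *m Lam a), (fun k => ys k *m Lam a); split; [|split].
- by move=> e e0; have [N hN] := cx e e0; exists N => k kN; rewrite aX iso_Bn //; exact: hN.
- by move=> e e0; have [N hN] := cy e e0; exists N => k kN; rewrite iso_Bn //; exact: hN.
- by move=> k; apply: up; [exact: (hF k).1 | exact: hF].
Qed.
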